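(* Let $\mathcal A$ be a category of cubes. There is an isomorphism $\mathrm{sh}_\mathcal{A}\mathcal{L}_\mathcal{A}(!\{\tau\})\cong\mathbf{1}$, where $\mathbf 1$ is the terminal $\mathcal A$-set. Therefore, when $\Sigma=\{\tau\}$, the category of labelled $\mathcal{A}$-sets is equivalent to the category of unlabelled $\mathcal{A}$-sets.
   Context: $[0]=\{()\}$, $[n]=\{0,1\}^n$ ($n\ge1$) with the product order; ${\rm PoSet}$: posets with strictly increasing maps. Face maps $\delta_i^\alpha:[n-1]\to[n]$ insert $\alpha$ at position $i$; $\square$ is the subcategory of ${\rm PoSet}$ with objects $[n]$ generated by face maps; its presheaves are precubical sets. A map is adjacency-preserving if strictly increasing and it sends pairs at Hamming distance $1$ to pairs at Hamming distance $1$. A category of cubes is a subcategory $\mathcal A\subset{\rm PoSet}$ with objects $\{[n]:n\ge0\}$, containing $\square$, with all morphisms adjacency-preserving. $\mathcal A$-sets are presheaves on $\mathcal A$; $\mathcal A[p]=\mathcal A(-,[p])$, $\partial\mathcal A[p]$ its subpresheaf of cubes of dimension $<p$. $\mathcal L_\mathcal A$ is the left adjoint of restriction along $\square\subset\mathcal A$. For a set $\Sigma$, $!\Sigma$ is the precubical set with $(!\Sigma)_0=\{()\}$, $(!\Sigma)_n=\Sigma^n$, $\partial_i^0=\partial_i^1$ deleting the $i$-th letter. $\mathrm{sh}_\mathcal A$ is left adjoint to the inclusion of the full subcategory of $\mathcal A$-sets orthogonal to the maps $\mathcal A[p]\sqcup_{\partial\mathcal A[p]}\mathcal A[p]\to\mathcal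 A[p]$, $p\ge2$. A labelled $\mathcal A$-set (over $\Sigma$) is an object of the slice category of $\mathcal A$-sets over $\mathrm{sh}_\mathcal A\mathcal L_\mathcal A(!\Sigma)$. *)

(* Defs.v *)
From HB Require Import structures.
From mathcomp Require Import all_boot zify.
Set Implicit Arguments. Unset Strict Implicit. Unset Printing Implicit Defensive.

(* [n] is represented by n.-tuple bool ([0] = the one-element 0-tuple).   *)
Definition cube (n : nat) : finType := n.-tuple bool.

Definition cle n (x y : cube n) : bool := [forall i, tnth x i ==> tnth y i].
Definition clt n (x y : cube n) : bool := (x != y) && cle x y.

Definition hamming n (x y : cube n) : nat := #|[set i | tnth x i != tnth y i]|.

(* maps [m] -> [n] (as finite functions, so equality is decidable) *)
Definition Hom (m n : nat) : finType := {ffun cube m -> cube n}.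
Definition idH n : Hom n n := [ffun x => x].
Definition compH l m n (g : Hom m n) (f : Hom l m) : Hom l n := [ffun x => g (f x)].

Definition strictly_increasing m n (f : Hom m n) : Prop :=
  forall x y, clt x y -> clt (f x) (f y).
Definition adjacency_preserving m n (f : Hom m n) : Prop :=
  strictly_increasing f /\ forall x y, hamming x y = 1 -> hamming (f x) (f y) = 1.

(* face map delta_i^a : [n] -> [n+1], inserting a at position i
   (positions are 0-indexed here: i ranges over 0..n) *)
Lemma size_ins n (x : n.-tuple bool) (i : 'I_n.+1) (a : bool) :
  size (take i x ++ a :: drop i x) == n.+1.
Proof.
rewrite size_cat /= size_take size_drop size_tuple.
case: i => i /= Hi.
by apply/eqP; case: ltnP => H; lia.
Qed.

Definition face n (i : 'I_n.+1) (a : bool) : Hom n n.+1 :=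
  [ffun x : cube n => Tuple (size_ins x i a)].

Inductive box : forall m n, Hom m n -> Prop :=
| box_id n : box (idH n)
| box_face m n (f : Hom m n) (i : 'I_n.+1) (a : bool) :
    box f -> box (compH (face i a) f).

Record cube_cat := CubeCat {
  Amor : forall m n, {set Hom m n};
  Amor_id : forall n, idH n \in Amor n n;
  Amor_comp : forall l m n (g : Hom m n) (f : Hom l m),
      g \in Amor m n -> f \in Amor l m -> compH g f \in Amor l n;
  Amor_face : forall n (i : 'I_n.+1) (a : bool), face i a \in Amor n n.+1;
  Amor_adj : forall m n (f : Hom m n), f \in Amor m n -> adjacency_preserving f
}.

Definition Apred (A : cube_cat) : forall m n, Hom m n -> Prop :=
  fun m n f => f \in Amor A m n.

Lemma box_sub (A : cube_cat) m n (f : Hom m n) : box f -> Apred A f.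
Proof.
elim=> [k|k l g i a _ IH]; first exact: Amor_id.
by apply: Amor_comp => //; apply: Amor_face.
Qed.

Record psh (C : forall m n, Hom m n -> Prop) := Psh {
  ob :> nat -> Type;
  act : forall m n (f : Hom m n), C m n f -> ob n -> ob m;
  act_id : forall n (p : C n n (idH n)) (x : ob n), act p x = x;
  act_comp : forall l m n (f : Hom l m) (g : Hom m n)
      (pf : C l m f) (pg : C m n g) (pgf : C l n (compH g f)) (x : ob n),
      act pgf x = act pf (act pg x)
}.
Arguments act {C} p0 {m n f} _ _.

Record psh_hom C (X Y : psh C) := PshHom {
  hcomp :> forall n, X n -> Y n;
  hnat : forall m n (f : Hom m n) (p : C m n f) (x : X n),
      hcomp (act X p x) = act Y p (hcomp x)
}.

Definition hom_eq C (X Y : psh C) (f g : psh_hom X Y) : Prop :=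
  forall n (x : X n), f n x = g n x.

Definition psh_iso C (X Y : psh C) : Prop :=
  exists (f : psh_hom X Y) (g : psh_hom Y X),
    (forall n (x : X n), g n (f n x) = x) /\ (forall n (y : Y n), f n (g n y) = y).

Definition precubical := psh box.
Definition Aset (A : cube_cat) := psh (Apred A).

Definition terminal (A : cube_cat) : Aset A :=
  @Psh (Apred A) (fun _ => unit) (fun _ _ _ _ x => x)
       (fun _ _ _ => erefl) (fun _ _ _ _ _ _ _ _ _ => erefl).

(* (!{tau})_n = {tau}^n; we take tau := tt, Sigma := unit.  Since every
   {tau}^m is a singleton, deleting letters is the unique map. *)
Lemma unit_tuple_eq k (x y : k.-tuple unit) : x = y.
Proof. by apply: eq_from_tnth => i; case: (tnth x i); case: (tnth y i). Qed.

Definition bang_tau_act m n (f : Hom m n) (p : box f) (w : n.-tuple unit)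
  : m.-tuple unit := [tuple of nseq m tt].

Definition bang_tau : precubical :=
  @Psh box (fun n => n.-tuple unit) bang_tau_act
       (fun _ _ _ => unit_tuple_eq _ _)
       (fun _ _ _ _ _ _ _ _ _ => unit_tuple_eq _ _).

(* a morphism of precubical sets X -> (restriction of Z to box) *)
Record res_hom (A : cube_cat) (X : precubical) (Z : Aset A) := ResHom {
  rcomp :> forall n, X n -> Z n;
  rnat : forall m n (f : Hom m n) (p : box f) (x : X n),
      rcomp (act X p x) = act Z (box_sub A p) (rcomp x)
}.

(* eta : X -> res P is a universal arrow, i.e. P = L_A X with unit eta *)
Definition L_universal (A : cube_cat) (X : precubical) (P : Aset A)
    (eta : res_hom X P) : Prop :=
  forall (Z : Aset A) (phi : res_hom X Z),
    (exists psi : psh_hom P Z, forall n (x : X n), psi n (eta n x) = phi n x) /\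
    (forall psi1 psi2 : psh_hom P Z,
        (forall n (x : X n), psi1 n (eta n x) = phi n x) ->
        (forall n (x : X n), psi2 n (eta n x) = phi n x) ->
        hom_eq psi1 psi2).

(* By the Yoneda lemma, a map A[p] ⊔_{∂A[p]} A[p] -> Y is a pair of p-cubes
   x, y of Y with the same restrictions along all f : [k] -> [p] in A, k < p;
   it extends (necessarily uniquely, the fold map being epi) along the fold
   map A[p] ⊔_{∂A[p]} A[p] -> A[p] iff x = y. *)
Definition orthogonal (A : cube_cat) (Y : Aset A) : Prop :=
  forall p, 2 <= p -> forall x y : Y p,
    (forall k (f : Hom k p) (pf : Apred A f), k < p -> act Y pf x = act Y pf y) ->
    x = y.

(* eta : P -> Y is a universal arrow into the orthogonal subcategory,
   i.e. Y = sh_A P with unit eta *)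
Definition sh_universal (A : cube_cat) (P Y : Aset A) (eta : psh_hom P Y) : Prop :=
  orthogonal Y /\
  forall (Z : Aset A), orthogonal Z -> forall phi : psh_hom P Z,
    (exists psi : psh_hom Y Z, forall n (x : P n), psi n (eta n x) = phi n x) /\
    (forall psi1 psi2 : psh_hom Y Z,
        (forall n (x : P n), psi1 n (eta n x) = phi n x) ->
        (forall n (x : P n), psi2 n (eta n x) = phi n x) ->
        hom_eq psi1 psi2).

(* Main.v *)
Require Import Defs.
From mathcomp Require Import all_boot zify.
Set Implicit Arguments. Unset Strict Implicit. Unset Printing Implicit Defensive.

Lemma tnth_liftS n (x : cube n.+1) (i : 'I_n) :
  tnth x (lift ord0 i) = tnth (behead_tuple x) i.
Proof.
rewrite tnth_behead; congr tnth; apply: val_inj => /=.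
by rewrite /bump /= inordK //; case: i => i /= Hi; lia.
Qed.

Lemma cleS n (x y : cube n.+1) :
  cle x y = (thead x ==> thead y) && cle (behead_tuple x) (behead_tuple y).
Proof.
apply/idP/andP.
- move/forallP=> H; split; first exact: H.
  by apply/forallP=> i; rewrite -!tnth_liftS; apply: H.
- case=> H0 /forallP H; apply/forallP=> i.
  case: (unliftP ord0 i) => [j ->|->] //.
  by rewrite !tnth_liftS; apply: H.
Qed.

Lemma hammingS n (x y : cube n.+1) :
  hamming x y = (thead x != thead y) + hamming (behead_tuple x) (behead_tuple y).
Proof.
rewrite /hamming -!sum1_card big_mkcond big_ord_recl /= inE.
congr addn.
rewrite [RHS]big_mkcond; apply: eq_bigr => i _; by rewrite !inE !tnth_liftS.

Qed.

Lemma face0E n a (x : cube n) : val (face ord0 a x) = a :: val x.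
Proof. by rewrite /face ffunE /= take0 drop0. Qed.

Lemma face1E n a (x : cube n.+1) y s : val x = y :: s ->
  val (face (inord 1 : 'I_n.+2) a x) = y :: a :: s.
Proof. by move=> Hx; rewrite /face ffunE /= inordK // Hx /= take0 drop0. Qed.

Lemma hamming0 n (x y : cube n) : hamming x y = 0 -> x = y.
Proof.
move/eqP; rewrite /hamming cards_eq0 => /eqP H.
apply: eq_from_tnth => i; apply/eqP; apply: negbNE; apply/negP => Hi.
have : i \in [set i | tnth x i != tnth y i] by rewrite inE.
by rewrite H inE.
Qed.
Lemma box_pt n (v : cube n) : exists d : Hom 0 n, box d /\ forall x, d x = v.
Proof.
elim: n v => [|n IH] v.
  by exists (idH 0); split; [exact: box_id | move=> x; rewrite ffunE (tuple0 x) (tuple0 v)].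
have [d' [bd Hd]] := IH (behead_tuple v).
exists (compH (face ord0 (thead v)) d'); split; first by [apply: box_face | exact: box_id].
move=> x; apply: val_inj; rewrite ffunE face0E Hd.
by rewrite [in RHS](tuple_eta v).
Qed.

Lemma box_pref k (t : k.-tuple bool) :
  exists d : Hom 1 k.+1, box d /\ forall x : cube 1, val (d x) = thead x :: val t.
Proof.
elim: k t => [|k IH] t.
  exists (idH 1); split; first by [apply: box_face | exact: box_id].
  move=> x; rewrite tuple0 ffunE /= [in LHS](tuple_eta x) /=.
  by case: x => [[|a [|b s]]] //.
have [d' [bd Hd]] := IH (behead_tuple t).
exists (compH (face (inord 1) (thead t)) d'); split; first by [apply: box_face | exact: box_id].
move=> x; rewrite ffunE (face1E _ (Hd x)).
by rewrite [in RHS](tuple_eta t).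
Qed.

Lemma box_edge n (u w : cube n) : cle u w -> hamming u w = 1 ->
  exists d : Hom 1 n, box d /\ d [tuple false] = u /\ d [tuple true] = w.
Proof.
elim: n u w => [|n IH] u w.
  by rewrite /hamming -sum1_card big_mkcond big_ord0.
rewrite cleS hammingS => /andP[Hh Hc].
case E: (thead u != thead w) => /= Hm.
  have Hu : thead u = false by move: Hh E; case: (thead u); case: (thead w).
  have Hw : thead w = true by move: Hh E; case: (thead u); case: (thead w).
  have Hbe : behead_tuple u = behead_tuple w.
    by apply: hamming0; move: Hm; rewrite add1n => -[].
  have [d [bd Hd]] := box_pref (behead_tuple u).
  exists d; split=> //; split; apply: val_inj; rewrite Hd.
    by rewrite [in RHS](tuple_eta u) Hu.
  by rewrite [in RHS](tuple_eta w) Hw Hbe.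
move/negbFE/eqP: E => E.
have [d' [bd [H0 H1]]] := IH _ _ Hc Hm.
exists (compH (face ord0 (thead u)) d'); split; first by [apply: box_face | exact: box_id].
split; apply: val_inj; rewrite ffunE face0E ?H0 ?H1.
  by rewrite [in RHS](tuple_eta u).
by rewrite E [in RHS](tuple_eta w).
Qed.

Lemma cle0 (x y : cube 0) : cle x y.
Proof. by apply/forallP => -[]. Qed.

Lemma ham0 (x y : cube 0) : hamming x y = 0.
Proof. by rewrite /hamming -sum1_card big_mkcond big_ord0. Qed.

Lemma cube1_cases (x : cube 1) : x = [tuple false] \/ x = [tuple true].
Proof.
case: x => [[|a [|b s]] Hs] //.
by case: a in Hs *; [right|left]; apply: val_inj.
Qed.

Lemma low_box m n (f : Hom m n) : m <= 1 -> adjacency_preserving f ->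
  exists d : Hom m n, box d /\ d = f.
Proof.
case: m f => [|[|//]] f _ [Hinc Hadj].
  have [d [bd Hd]] := box_pt (f [tuple]).
  by exists d; split=> //; apply/ffunP => x; rewrite Hd (tuple0 x).
have Hlt : clt [tuple false] [tuple true].
  apply/andP; split; first by apply/eqP => /(congr1 val).
  by rewrite cleS /= cle0.
have Hh : hamming [tuple false] [tuple true] = 1 by rewrite hammingS ham0.
have /andP[_ Hc] := Hinc _ _ Hlt.
have [d [bd [H0 H1]]] := box_edge Hc (Hadj _ _ Hh).
exists d; split=> //; apply/ffunP => x.
by case: (cube1_cases x) => ->.
Qed.

Section Main.
Variable A : cube_cat.

Lemma box_global (Z : Aset A) (HZ : orthogonal Z) (g : forall n, Z n)
  (hb : forall m n (f : Hom m n) (p : box f), act Z (box_sub A p) (g n) = g m) :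
  forall m n (f : Hom m n) (pf : Apred A f), act Z pf (g n) = g m.
Proof.
elim/ltn_ind=> m IH n f pf.
case: (leqP m 1) => Hm.
  have [d [bd Ed]] := low_box Hm (Amor_adj pf).
  subst f.
  have -> : pf = box_sub A bd by apply: bool_irrelevance.
  exact: hb.
apply: HZ => // k h ph Hk.
have pfh : Apred A (compH f h) by apply: Amor_comp.
rewrite -(@act_comp _ Z _ _ _ _ _ ph pf pfh) (IH k Hk).
by rewrite (IH k Hk).
Qed.

Definition idhom (X : Aset A) : psh_hom X X :=
  @PshHom _ X X (fun n x => x) (fun _ _ _ _ _ => erefl).

Definition tohom (X : Aset A) : psh_hom X (terminal A) :=
  @PshHom _ X (terminal A) (fun n x => tt) (fun _ _ _ _ _ => erefl).

Definition consthom (X Y : Aset A) (y : forall n, Y n)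
  (hy : forall m n (f : Hom m n) (pf : Apred A f), act Y pf (y n) = y m) :
  psh_hom X Y :=
  @PshHom _ X Y (fun n _ => y n) (fun m n f p x => esym (hy m n f p)).

End Main.

Theorem proposition4p25 (A : cube_cat)
    (P : Aset A) (eta1 : res_hom bang_tau P) (H1 : L_universal eta1)
    (Y : Aset A) (eta2 : psh_hom P Y) (H2 : sh_universal eta2) :
  psh_iso Y (terminal A) /\
  (forall X : Aset A,
      (exists lab : psh_hom X Y, True) /\
      (forall lab1 lab2 : psh_hom X Y, hom_eq lab1 lab2)).
Proof.
have [HYo HYu] := H2.
pose w n : bang_tau n := [tuple of nseq n tt].
pose y0 n : Y n := eta2 n (eta1 n (w n)).
have hb : forall m n (f : Hom m n) (p : box f),
    act Y (box_sub A p) (y0 n) = y0 m.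
  move=> m n f p; rewrite /y0 -hnat -rnat.
  by congr (eta2 _ (eta1 _ _)); apply: unit_tuple_eq.
have hy := box_global HYo hb.
pose z : res_hom bang_tau Y :=
  @ResHom A bang_tau Y (fun n x => eta2 n (eta1 n x))
    (fun m n f p x => etrans (congr1 (eta2 m) (rnat eta1 p x)) (hnat eta2 _ _)).
have HP : forall n (x : P n), eta2 n x = y0 n.
  move=> n x.
  have [_ U] := H1 Y z.
  apply: (U eta2 (consthom P hy)) => // k v /=.
  by rewrite /y0; congr (eta2 _ (eta1 _ _)); apply: unit_tuple_eq.
have HY : forall n (y : Y n), y = y0 n.
  move=> n y.
  have [_ U] := HYu Y HYo eta2.
  by apply: (U (idhom Y) (consthom Y hy)) => // k v /=; rewrite HP.
split.
  exists (tohom Y); exists (consthom (terminal A) hy); split.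
    by move=> n y /=; rewrite -(HY n y).
  by move=> n [].
move=> X; split; first by exists (consthom X hy).
by move=> l1 l2 n x; rewrite (HY _ (l1 n x)) (HY _ (l2 n x)).
Qed.
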